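(* There is a comeager set $C\subseteq(\mathbb R^{\mathbb N})^{\mathbb N}$ such that $({=^{+2}}\restriction C)\le_B{=^+}$.
   Context: For an equivalence relation $E$ on $X$, the Friedman–Stanley jump $E^+$ is the equivalence relation on $X^{\mathbb N}$ given by $x\mathrel{E^+}y\iff\{[x(i)]_E:i\in\mathbb N\}=\{[y(i)]_E:i\in\mathbb N\}$. Here $=^+$ is $(=_{\mathbb R})^+$ on $\mathbb R^{\mathbb N}$ and $=^{+2}=(=^+)^+$ on $(\mathbb R^{\mathbb N})^{\mathbb N}$, with the product topologies. *)

(* Defs.v *)
From HB Require Import structures.
From mathcomp Require Import all_boot all_order all_algebra.
From mathcomp Require Import all_classical all_reals all_analysis.
Set Implicit Arguments. Unset Strict Implicit. Unset Printing Implicit Defensive.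
Import Order.TTheory GRing.Theory Num.Theory.
Import numFieldTopology.Exports numFieldNormedType.Exports.
Local Open Scope classical_set_scope.

Definition fs_jump (X : Type) (E : X -> X -> Prop) : (nat -> X) -> (nat -> X) -> Prop :=
  fun x y => range (fun i => [set z | E (x i) z]) = range (fun i => [set z | E (y i) z]).

Definition Rtop (R : realType) : topologicalType := Real.sort R.

Definition RN (R : realType) : topologicalType :=
  @prod_topology nat (fun _ : nat => Rtop R).
Definition RNN (R : realType) : topologicalType :=
  @prod_topology nat (fun _ : nat => RN R).

Definition eq_plus (R : realType) : RN R -> RN R -> Prop := fs_jump (@eq R).
Definition eq_plus2 (R : realType) : RNN R -> RNN R -> Prop := fs_jump (@eq_plus R).

Definition comeager (T : topologicalType) (C : set T) : Prop :=
  exists U : nat -> set T, (forall n, open (U n) /\ dense (U n)) /\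
    \bigcap_n U n `<=` C.

Definition borel_set (T : topologicalType) (A : set T) : Prop :=
  <<s [set: T], open >> A.
Definition borel_fun (T U : topologicalType) (f : T -> U) : Prop :=
  forall V : set U, open V -> borel_set (f @^-1` V).

(* Main.v *)
Require Import Defs.
From mathcomp Require Import all_boot all_order all_algebra.
From mathcomp Require Import all_classical all_reals all_analysis.
From mathcomp Require Import finmap.
From mathcomp Require Import ring lra.
Import Order.TTheory GRing.Theory Num.Theory.
Import numFieldTopology.Exports numFieldNormedType.Exports.
Local Open Scope classical_set_scope.
Local Open Scope ring_scope.

Section Main.
Variable R : realType.
Lemma coord_cont (i j : nat) : continuous (fun x : RNN R => (x i j : Rtop R)).
Proof.
move=> x.
apply: (@continuous_comp (RNN R) (RN R) (Rtop R) (@proj nat (fun _ => RN R) i) (@proj nat (fun _ => Rtop R) j)).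
  exact: proj_continuous.
exact: proj_continuous.
Qed.

Lemma coord_open (i j : nat) (A : set R) : open (A : set (Rtop R)) -> open [set x : RNN R | A (x i j)].
Proof.
move=> oA.
have -> : [set x : RNN R | A (x i j)] = (fun x : RNN R => (x i j : Rtop R)) @^-1` A by [].
apply: open_comp => //; move=> x _; exact: coord_cont.
Qed.

Lemma upd_cont (x0 : RNN R) i j : continuous (fun t : Rtop R => (@dfwith nat (fun _ => RN R) x0 i (@dfwith nat (fun _ => Rtop R) (x0 i) j t) : RNN R)).
Proof.
move=> t.
apply: (@continuous_comp (Rtop R) (RN R) (RNN R) (fun t => @dfwith nat (fun _ => Rtop R) (x0 i) j t : RN R) (fun y : RN R => @dfwith nat (fun _ => RN R) x0 i y : RNN R)).
  exact: (@dfwith_continuous nat (fun _ => Rtop R)).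
exact: (@dfwith_continuous nat (fun _ => RN R)).
Qed.
Lemma exists_other (O : set R) (c d : R) : open (O : set (Rtop R)) -> O c -> exists t, O t /\ t != d.
Proof.
move=> oO Oc.
have [cd|cd] := eqVneq c d; last by exists c.
have : nbhs (c : Rtop R) O by rewrite openE in oO; exact: oO.
move/nbhs_ballP => [e /= e0 eO].
exists (c + e / 2); split.
  apply: eO; rewrite -ball_normE /ball_ /= opprD addrA subrr add0r normrN.
  by rewrite ger0_norm ?divr_ge0 ?ltW // ltr_pdivrMr // ltr_pMr // ltr1n.
rewrite -cd; apply/eqP => /(congr1 (fun z => z - c)); rewrite subrr addrC addKr.
by move/eqP; rewrite mulf_eq0 invr_eq0 pnatr_eq0 /= orbF gt_eqF.
Qed.

Definition CC (x : RNN R) := forall i k j l, i <> k -> x i j <> x k l.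
Definition dec4 (n : nat) : nat * nat * nat * nat := odflt (0,0,0,0)%N (choice.unpickle n).
Definition UU (n : nat) : set (RNN R) :=
  let: (i,j,k,l) := dec4 n in if i == k then [set: RNN R] else [set x | x i j != x k l].

Lemma open_neq_coord i j k l : open [set x : RNN R | x i j != x k l].
Proof.
have -> : [set x : RNN R | x i j != x k l] = \bigcup_(r in [set: R])
   (([set x : RNN R | x i j < r] `&` [set x | r < x k l]) `|` ([set x : RNN R | x k l < r] `&` [set x | r < x i j])).
  apply/seteqP; split => x /=.
    move=> ne; exists ((x i j + x k l) / 2) => //=.
    have [lt|gt|eq] := ltgtP (x i j) (x k l); last by move: ne; rewrite eq eqxx.
      by left; split; rewrite /= (midf_lt lt).
    by right; rewrite (addrC (x i j)); split; rewrite /= (midf_lt gt).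
  move=> [r _ [[/= a b]|[/= a b]]]; apply/eqP => e.
    by move: (lt_trans a b); rewrite e ltxx.
  by move: (lt_trans a b); rewrite e ltxx.
apply: bigcup_open => r _; apply: openU; apply: openI.
- exact: (@coord_open i j [set y | y < r] (@open_lt _ r)).
- exact: (@coord_open k l [set y | r < y] (@open_gt _ r)).
- exact: (@coord_open k l [set y | y < r] (@open_lt _ r)).
- exact: (@coord_open i j [set y | r < y] (@open_gt _ r)).
Qed.

Lemma UU_open n : open (UU n).
Proof.
rewrite /UU; case: (dec4 n) => [[[i j] k] l]; case: eqP => _; [exact: openT | exact: open_neq_coord].
Qed.

Lemma UU_dense n : dense (UU n).
Proof.
rewrite /UU; case: (dec4 n) => [[[i j] k] l]; case: eqP => ik.
  by move=> O O0 _; rewrite setIT.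
move=> O [x0 Ox0] oO.
pose upd := fun t : Rtop R => (@dfwith nat (fun _ => RN R) x0 i (@dfwith nat (fun _ => Rtop R) (x0 i) j t) : RNN R).
have oO' : open (upd @^-1` O : set (Rtop R)).
  by apply: open_comp => // t _; exact: upd_cont.
have O'c : (upd @^-1` O) (x0 i j).
  rewrite /upd /=.
  suff -> : @dfwith nat (fun _ => RN R) x0 i (@dfwith nat (fun _ => Rtop R) (x0 i) j (x0 i j)) = x0 by [].
  apply: functional_extensionality_dep => a; case: dfwithP => // .
  by apply: functional_extensionality_dep => b; case: dfwithP.
have [t [Ot tne]] := @exists_other _ _ (x0 k l) oO' O'c.
exists (upd t); split => //=.
rewrite /upd /=.
have E1 : forall (y : RN R), (@dfwith nat (fun _ => RN R) x0 i y) i = y.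
  by move=> y; exact: (@dfwith_in nat (fun _ => RN R) x0 i y).
have E2 : forall (y : RN R), (@dfwith nat (fun _ => RN R) x0 i y) k = x0 k.
  by move=> y; apply: (@dfwith_out nat (fun _ => RN R) x0 i y k); exact/eqP.
have E3 : (@dfwith nat (fun _ => Rtop R) (x0 i) j t) j = t.
  exact: (@dfwith_in nat (fun _ => Rtop R) (x0 i) j t).
by rewrite E1 E2 E3.
Qed.

Lemma CC_comeager : comeager CC.
Proof.
exists UU; split; first by move=> n; split; [exact: UU_open | exact: UU_dense].
move=> x Ux i k j l ik.
have := Ux (choice.pickle (i,j,k,l)) I; rewrite /UU /dec4 choice.pickleK /=.
by case: eqP => // _ /eqP.
Qed.

Definition c3 : R := 3^-1.
Definition w (k : nat) : R := c3 ^+ k.+1.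
Definition ps (d : nat -> bool) (N : nat) : R := \sum_(0 <= k < N) (d k)%:R * w k.

Lemma c3_gt0 : 0 < c3. Proof. by rewrite /c3 invr_gt0 ltr0n. Qed.
Lemma w_ge0 k : 0 <= w k. Proof. by rewrite /w exprn_ge0 // ltW // c3_gt0. Qed.
Lemma w_gt0 k : 0 < w k. Proof. by rewrite /w exprn_gt0 // c3_gt0. Qed.

Lemma ps_rec d N : ps d N.+1 = ps d N + (d N)%:R * w N.
Proof. by rewrite /ps big_nat_recr. Qed.

Lemma ps_nd d : {homo ps d : n m / (n <= m)%N >-> n <= m}.
Proof.
apply/nondecreasing_seqP => n; rewrite ps_rec lerDl mulr_ge0 // ?w_ge0 //.
Qed.

Lemma ps_tail d m n : ps d (m.+1 + n) <= ps d m.+1 + w m / 2 * (1 - c3 ^+ n).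
Proof.
elim: n => [|n IH]; first by rewrite addn0 expr0 subrr mulr0 addr0.
rewrite addnS ps_rec.
have -> : w m / 2 * (1 - c3 ^+ n.+1) = w m / 2 * (1 - c3 ^+ n) + w (m.+1 + n).
  rewrite /w /c3 !exprS exprD; by field.
rewrite addrA; apply: lerD => //.
by case: (d _); rewrite ?mul1r ?mul0r ?lexx ?w_ge0.
Qed.
Lemma ps_le d m N : ps d N <= ps d m.+1 + w m / 2.
Proof.
have H : ps d N <= ps d (m.+1 + N) by apply: ps_nd; rewrite leq_addl.
apply: (le_trans H); apply: (le_trans (ps_tail d m N)); rewrite lerD2l.
rewrite ler_piMr ?divr_ge0 ?w_ge0 // lerBlDr lerDl exprn_ge0 // ltW // c3_gt0.
done.
Qed.

Lemma ps_cvg d : cvgn (ps d).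
Proof.
apply: nondecreasing_is_cvgn; first exact: ps_nd.
by exists (ps d 1 + w 0 / 2) => _ [N _ <-]; exact: ps_le.
Qed.

Definition code (d : nat -> bool) : R := limn (ps d).

Lemma code_ge d N : ps d N <= code d.
Proof. exact: nondecreasing_cvgn_le (ps_nd d) (ps_cvg d) N. Qed.

Lemma code_le d m : code d <= ps d m.+1 + w m / 2.
Proof. apply: limr_le; first exact: ps_cvg. by apply: nearW => N; exact: ps_le. Qed.

Lemma code_lt d d' m : (forall k, (k < m)%N -> d k = d' k) -> d m = true -> d' m = false ->
  code d' < code d.
Proof.
move=> eqk dm d'm.
have Em : ps d m = ps d' m.
  rewrite /ps big_nat_cond [RHS]big_nat_cond; apply: eq_bigr => k /andP[/andP[_ km] _].
  by rewrite eqk.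
apply: (le_lt_trans (code_le d' m)); apply: (lt_le_trans _ (code_ge d m.+1)).
rewrite !ps_rec dm d'm Em mul0r addr0 mul1r ltrD2l.
by rewrite ltr_pdivrMr // ltr_pMr ?w_gt0 // ltr1n.
Qed.

Lemma code_inj d d' : code d = code d' -> d = d'.
Proof.
move=> E; apply: funext => k0; apply/eqP/negP => /negP ne.
have ex : exists k, d k != d' k by exists k0.
pose m := ex_minn ex.
have : d m != d' m /\ (forall k, (k < m)%N -> d k = d' k).
  rewrite /m; case: ex_minnP => m' dm minm; split => // k km.
  by apply/eqP/negP => /negP /minm; rewrite leqNgt km.
move=> [dm lt]; move: dm.
case Edm : (d m); case Ed'm : (d' m) => // _.
  by move: (@code_lt d d' m lt Edm Ed'm); rewrite E ltxx.
have lt' : forall k, (k < m)%N -> d' k = d k by move=> k /lt ->.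
by move: (@code_lt d' d m lt' Ed'm Edm); rewrite E ltxx.
Qed.

Definition qr (m : nat) : R := ratr (odflt 0%Q (choice.unpickle m)).

Lemma qr_dense (u u' : R) : u < u' -> exists m, u < qr m < u'.
Proof.
move=> lt; have [q] := rat_in_itvoo lt; rewrite in_itv /= => h.
by exists (choice.pickle q); rewrite /qr choice.pickleK.
Qed.

Definition dig (u v : R) (k : nat) : bool :=
  if odd k then qr k./2 < v else qr k./2 < u.

Definition gp (u v : R) : R := code (dig u v).

Lemma qr_sep (s t : R) : (forall m, (qr m < s) = (qr m < t)) -> s = t.
Proof.
move=> H; apply/eqP; case: (ltgtP s t) => // lt.
  have [m /andP[a b]] := qr_dense _ _ lt; have := H m.
  by rewrite (lt_gtF a) b.
have [m /andP[a b]] := qr_dense _ _ lt; have := H m.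
by rewrite (lt_gtF a) b.
Qed.

Lemma gp_inj (u v u' v' : R) : gp u v = gp u' v' -> u = u' /\ v = v'.
Proof.
move/code_inj => E; split; apply: qr_sep => m.
  by have := congr1 (fun f => f m.*2) E; rewrite /dig odd_double doubleK.
by have := congr1 (fun f => f m.*2.+1) E; rewrite /dig /= odd_double /= uphalf_double.
Qed.

Definition boxp (u : RN R) (t : nat * rat * rat) : bool :=
  (ratr t.1.2 < u t.1.1) && (u t.1.1 < ratr t.2).
Definition box (s : seq (nat * rat * rat)) : set (RN R) := [set u | all (boxp u) s].

Lemma open_rat_itv (A : set R) (x : R) : open (A : set (Rtop R)) -> A x ->
  exists a b : rat, ratr a < x < ratr b /\ (forall y, ratr a < y < ratr b -> A y).
Proof.
move=> oA Ax.
have : nbhs (x : Rtop R) A by rewrite openE in oA; exact: oA.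
move/nbhs_ballP => [e /= e0 eA].
have h1 : x - e < x by rewrite ltrBlDr ltrDl.
have h2 : x < x + e by rewrite ltrDl.
have [a] := rat_in_itvoo h1; rewrite in_itv /= => /andP[a1 a2].
have [b] := rat_in_itvoo h2; rewrite in_itv /= => /andP[b1 b2].
exists a, b; split; first by rewrite a2 b1.
move=> y /andP[ay yb]; apply: eA; rewrite -ball_normE /ball_ /=.
rewrite ltr_norml; apply/andP; split; lra.
Qed.

Lemma box_list (L : seq (set (RN R))) (v : RN R) :
  (forall w, w \in L -> exists n (A : set R), open (A : set (Rtop R)) /\ w = [set u : RN R | A (u n)]) ->
  (forall w, w \in L -> w v) ->
  exists s, box s v /\ box s `<=` [set u | forall w, w \in L -> w u].
Proof.
elim: L => [|w L IH] hsub hv; first by exists [::].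
have hsub' : forall w', w' \in L -> exists n (A : set R), open (A : set (Rtop R)) /\ w' = [set u : RN R | A (u n)].
  by move=> w' w'L; apply: hsub; rewrite in_cons w'L orbT.
have hv' : forall w', w' \in L -> w' v.
  by move=> w' w'L; apply: hv; rewrite in_cons w'L orbT.
have [s [sv sL]] := IH hsub' hv'.
have [n [A [oA wE]]] := hsub w (mem_head _ _).
have := hv _ (mem_head _ _); rewrite wE /= => Avn.
have [a [b [/andP[av vb] abA]]] := open_rat_itv _ _ oA Avn.
exists ((n, a, b) :: s); split; first by rewrite /box /= /boxp /= av vb.
move=> u; rewrite /box /= => /andP[/andP[/= au ub] us] w'.
rewrite in_cons => /orP[/eqP ->|w'L]; last exact: sL.
by apply: abA; rewrite au ub.
Qed.

Lemma box_base (V : set (RN R)) (v : RN R) : open V -> V v ->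
  exists s, box s v /\ box s `<=` V.
Proof.
move=> oV Vv.
have : nbhs v V by move: oV; rewrite openE; apply.
move=> [/= X [[/= B + <-] [W BW Wx BV]]] => /(_ W BW) [] /=.
move=> F Fsup Weq.
have sub : forall w : set (RN R), w \in (F : seq _) -> exists n (A : set R), open (A : set (Rtop R)) /\ w = [set u : RN R | A (u n)].
  move=> w /Fsup /set_mem [n _ [A oA <-]].
  by exists n, A.
have hv : forall w : set (RN R), w \in (F : seq _) -> w v.
  by move=> w wF; move: Wx; rewrite -Weq; apply.
have [s [sv sF]] := box_list _ _ sub hv.
exists s; split => // u /sF Fu; apply: BV; exists W => //.
by rewrite -Weq => w /= wF; apply: Fu.
Qed.

Definition M := @g_sigma_algebraType (nat -> nat -> R) (@open (RNN R)).

Lemma coord_meas i j (r : R) : measurable_fun setT (fun x : M => ((r < x i j)%R%:R : R)).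
Proof.
have -> : (fun x : M => ((r < x i j)%R%:R : R)) = \1_[set x : M | r < x i j].
  apply: funext => x; rewrite indicE; case: (boolP (r < x i j)) => h.
    by rewrite mem_set.
  by rewrite memNset //= ; apply/negP.
apply: measurable_realfun.measurable_indic; apply: sub_sigma_algebra.
exact: (@coord_open i j [set y | r < y] (@open_gt _ r)).
Qed.

Lemma dig_meas i j l k : measurable_fun setT (fun x : M => ((dig (x i j) (x i l) k)%:R : R)).
Proof. rewrite /dig; case: (odd k); exact: coord_meas. Qed.

Lemma ps_meas i j l N : measurable_fun setT (fun x : M => ps (dig (x i j) (x i l)) N).
Proof.
rewrite /ps; apply: measurable_sum => k.
apply: (@measurable_realfun.measurable_funM _ _ _ _ (fun x : M => ((dig (x i j) (x i l) k)%:R : R)) (fun _ => w k)).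
  exact: dig_meas.
exact: measurable_cst.
Qed.

Lemma gp_meas i j l : measurable_fun setT (fun x : M => gp (x i j) (x i l)).
Proof.
apply: (@measurable_realfun.measurable_fun_cvg _ _ _ _ (fun N (x : M) => ps (dig (x i j) (x i l)) N)).
  by move=> N; exact: ps_meas.
by move=> x _; exact: ps_cvg.
Qed.

Definition dec3 (n : nat) : nat * nat * nat := odflt (0,0,0)%N (choice.unpickle n).

Definition ff (x : RNN R) : RN R :=
  fun n => gp (x (dec3 n).1.1 (dec3 n).1.2) (x (dec3 n).1.1 (dec3 n).2).

Lemma ffn_meas n : measurable_fun setT (fun x : M => ff x n).
Proof. exact: gp_meas. Qed.

Lemma box_pre s : measurable ((ff @^-1` box s) : set M).
Proof.
elim: s => [|[[n a] b] s IH].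
  rewrite (_ : (ff @^-1` box [::] : set M) = [set: M]); first exact: measurableT.
  by apply/seteqP; split.
have -> : (ff @^-1` box ((n, a, b) :: s) : set M) =
   ((fun x : M => ff x n) @^-1` `](ratr a : R), (ratr b)[) `&` (ff @^-1` box s).
  apply/seteqP; split => x; rewrite /box /= /boxp /= in_itv /=.
    by move=> /andP[-> ->].
  by move=> [-> ->].
apply: measurableI => //.
rewrite -[X in measurable X]setTI; apply: ffn_meas => //; exact: measurable_itv.
Qed.

Lemma ff_borel : borel_fun ff.
Proof.
move=> V oV.
pose E := fun m : nat => match choice.unpickle m with
  | Some s => if pselect (box s `<=` V) then (ff @^-1` box s : set M) else set0
  | None => set0 end.
have -> : ff @^-1` V = \bigcup_m E m.
  apply/seteqP; split => x.
    move=> /= Vfx; have [s [sv sV]] := box_base _ _ oV Vfx.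
    exists (choice.pickle s) => //; rewrite /E choice.pickleK.
    by case: pselect.
  move=> [m _]; rewrite /E; case: (choice.unpickle m) => // s.
  by case: pselect => // sV; move/sV.
apply: (@bigcupT_measurable _ M) => m; rewrite /E.
case: (choice.unpickle m) => // s.
by case: pselect => ?; [exact: box_pre | exact: measurable0].
Qed.

Lemma jumpP (T : Type) (E : T -> T -> Prop) (a b : nat -> T) :
  (forall x, E x x) -> (forall x y, E x y -> E y x) -> (forall x y z, E x y -> E y z -> E x z) ->
  fs_jump E a b <-> (forall i, exists k, E (a i) (b k)) /\ (forall k, exists i, E (a i) (b k)).
Proof.
move=> Er Es Et; split.
  move=> H; split.
    move=> i; have : range (fun i => [set z | E (a i) z]) [set z | E (a i) z] by exists i.
    rewrite /fs_jump in H; rewrite H => -[k _ Hk]; exists k.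
    have : [set z | E (b k) z] (b k) by exact: Er.
    by rewrite Hk.
  move=> k; have : range (fun i => [set z | E (b i) z]) [set z | E (b k) z] by exists k.
  rewrite /fs_jump in H; rewrite -H => -[i _ Hi]; exists i.
  have : [set z | E (a i) z] (a i) by exact: Er.
  by rewrite Hi => /Es.
move=> [H1 H2]; rewrite /fs_jump; apply/seteqP; split => _ [i _ <-].
  have [k Hk] := H1 i; exists k => //; apply/seteqP; split => z /=.
    by move=> bz; apply: Et Hk bz.
  by move=> az; apply: Et (Es _ _ Hk) az.
have [k Hk] := H2 i; exists k => //; apply/seteqP; split => z /=.
  by move=> az; apply: Et (Es _ _ Hk) az.
by move=> bz; apply: Et Hk bz.
Qed.

Lemma eqplusP (a b : RN R) : eq_plus a b <->
  (forall i, exists k, a i = b k) /\ (forall k, exists i, a i = b k).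
Proof.
apply: jumpP; [by [] | by move=> ? ? -> | by move=> ? ? ? -> ->].
Qed.

Lemma eqplus2P (x y : RNN R) : eq_plus2 x y <->
  (forall i, exists k, eq_plus (x i) (y k)) /\ (forall k, exists i, eq_plus (x i) (y k)).
Proof.
apply: jumpP; rewrite /eq_plus /fs_jump; [by [] | by move=> ? ? -> | by move=> ? ? ? -> ->].
Qed.

Definition PP (x y : RNN R) := forall i j l, exists i' j' l', x i j = y i' j' /\ x i l = y i' l'.

Lemma dec3K t : dec3 (choice.pickle t) = t.
Proof. by rewrite /dec3 choice.pickleK. Qed.

Lemma ff_eq x y : eq_plus (ff x) (ff y) <-> PP x y /\ PP y x.
Proof.
rewrite eqplusP; split.
  move=> [H1 H2]; split.
    move=> i j l; have [m] := H1 (choice.pickle (i, j, l)).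
    rewrite /ff dec3K /= => /gp_inj [e1 e2].
    by exists (dec3 m).1.1, (dec3 m).1.2, (dec3 m).2.
  move=> i j l; have [m] := H2 (choice.pickle (i, j, l)).
  rewrite /ff dec3K /= => /gp_inj [e1 e2].
  by exists (dec3 m).1.1, (dec3 m).1.2, (dec3 m).2.
move=> [P1 P2]; split.
  move=> n; have [i' [j' [l' [e1 e2]]]] := P1 (dec3 n).1.1 (dec3 n).1.2 (dec3 n).2.
  by exists (choice.pickle (i', j', l')); rewrite /ff dec3K /= e1 e2.
move=> n; have [i' [j' [l' [e1 e2]]]] := P2 (dec3 n).1.1 (dec3 n).1.2 (dec3 n).2.
by exists (choice.pickle (i', j', l')); rewrite /ff dec3K /= e1 e2.
Qed.

Lemma half x y : CC x -> CC y -> PP x y -> PP y x -> forall i, exists k, eq_plus (x i) (y k).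
Proof.
move=> Cx Cy Pxy Pyx i.
have [k [j0 [_ [e0 _]]]] := Pxy i 0%N 0%N.
exists k; apply/eqplusP; split.
  move=> j; have [k' [a [b [ea eb]]]] := Pxy i 0%N j.
  have kk : k' = k.
    apply/eqP/negP => /negP/eqP nk; apply: (Cy k' k a j0 nk); by rewrite -ea -e0.
  by exists b; rewrite eb kk.
move=> l; have [i' [a [b [ea eb]]]] := Pyx k j0 l.
have ii : i' = i.
  apply/eqP/negP => /negP/eqP ni; apply: (Cx i' i a 0%N ni); by rewrite -ea -e0.
by exists b; rewrite eb ii.
Qed.

End Main.

Theorem claim1p6 (R : realType) :
  exists C : set (RNN R), comeager C /\
    exists f : RNN R -> RN R, borel_fun f /\
      forall x y, C x -> C y -> (eq_plus2 x y <-> eq_plus (f x) (f y)).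
Proof.
exists (@CC R); split; first exact: CC_comeager.
exists (@ff R); split; first exact: ff_borel.
move=> x y Cx Cy; rewrite ff_eq eqplus2P; split.
  move=> [H1 H2]; split.
    move=> i j l; have [k /eqplusP [K1 _]] := H1 i.
    have [j' ej] := K1 j; have [l' el] := K1 l.
    by exists k, j', l'.
  move=> k j l; have [i /eqplusP [_ K2]] := H2 k.
  have [j' ej] := K2 j; have [l' el] := K2 l.
  by exists i, j', l'.
move=> [P1 P2]; split; first exact: (@half R x y).
move=> k; have [i Hi] := @half R y x Cy Cx P2 P1 k.
by exists i; rewrite /eq_plus /fs_jump in Hi *; rewrite Hi.
Qed.
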